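(* Let $D$ be an oriented twisted link diagram and let $(F, D_F)$ be a link diagram realization of $D$. Let $(F,\bar s)$ be an irreducible surface pole state obtained from a surface pole state $(F,s)$ of $(F,D_F)$, and let $R$ be a connected component of $F\setminus \bar s$ ($=F\setminus s$). Then the number of I-poles on $\bar s$ lying in $R$ is equal to the number of O-poles on $\bar s$ lying in $R$.
   Context: A twisted link diagram is a link diagram in the plane which may have classical crossings, virtual crossings (crossings without over/under information), and bars (short marks) on arcs. An abstract link diagram is a pair $(\Sigma,D_\Sigma)$ of a compact, possibly non-orientable surface $\Sigma$ and a link diagram $D_\Sigma$ in $\Sigma$ such that the underlying 4-valent graph of $D_\Sigma$ is a deformation retract of $\Sigma$. The abstract link diagram associated with a twisted link diagram $D$ (Bourgoin's construction) is obtained by taking a small disk containing each classical crossing, a pair of disjoint bands at each virtual crossing, and bands along the arcs of $D$, where at each bar the band receives a half twist. A link diagram realization of $D$ is a pair $(F,D_F)$ where $F$ is a closed, possibly non-orientable surface and there is an embedding $f:\Sigma\to F$ with $f(D_\Sigma)=D_F$; $D_F$ is oriented by the orientation of $D$. A pole curve in $F$ is a simple closed curve in $F$ carrying finitely many (possibly zero) marked points called poles, such that the complement of the poles in the curve is a union of oriented arcs, and at each pole the orientations of the two adjacent arcs either both point toward the pole (sink pole, I-pole) or both point away from it (source pole, O-pole). Each pole carries a marker pointing to one local side of the curve; a pole on a collection $s$ of curves lies in the component of $F\setminus s$ into which its marker points. A pole curve link is a collection of pairwise disjoint pole curves. A surface pole state $(F,s)$ of $(F,D_F)$ is obtained by replacing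 every crossing of $D_F$ by its A-splice or its B-splice. Of the two smoothings at a crossing, one is compatible with the orientations of both strands and produces no poles; the other produces two arcs each carrying one pole, one sink and one source, with both markers pointing into the region between the two new arcs. A pole reduction on a pole curve removes two consecutive poles (necessarily one sink and one source) whose markers point to the same side of the curve, reorienting the arc between them so that the curve remains consistently oriented there. A pole curve is irreducible if no pole reduction applies, and a pole curve link is irreducible if every component is. Applying pole reductions to all pole curves of $s$ until none applies yields an irreducible pole curve link $\bar s$; $(F,\bar s)$ is the irreducible surface pole state associated with $(F,s)$. *)

(* Defs.v *)
From mathcomp Require Import all_boot.

Set Implicit Arguments.
Unset Strict Implicit.
Unset Printing Implicit Defensive.

(* At every classical crossing of the (planar)
   twisted link diagram D the four ends are labelled 0,1,2,3
   counterclockwise in the plane, end 0 being the end through which the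
   over-strand ENTERS the crossing; the over-strand leaves through end 2.
   The under-strand enters through end 1 or end 3 (recorded by [uin1]) and
   leaves through the opposite end.  Corner c of a crossing is the sector
   between end c and end c+1 (mod 4).                                       *)

Definition rot (k : 'I_4) (j : nat) : 'I_4 := inord ((k + j) %% 4).

Definition incoming_of (C : Type) (uin1 : C -> bool) (e : C * 'I_4) : bool :=
  (e.2 == 0 :> nat) || (e.2 == (if uin1 e.1 then 1 else 3) :> nat).

(* An oriented twisted link diagram, up to the data on which Bourgoin's
   abstract link diagram depends:
   - cr        : the classical crossings;
   - uin1      : orientation/sign data at each crossing (see above);
   - partner   : following the arc of D leaving an end we arrive (possibly
                 through virtual crossings and bars) at the partner end;
                 arcs go from an outgoing end to an incoming end;
   - twist     : parity of the number of bars on that arc;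
   - ncirc, circ_twist : components of D without classical crossings, with
                 the parity of their number of bars.                        *)
Record tld := TLD {
  cr :> finType;
  uin1 : cr -> bool;
  partner : cr * 'I_4 -> cr * 'I_4;
  twist : cr * 'I_4 -> bool;
  ncirc : nat;
  circ_twist : 'I_ncirc -> bool;
  partnerK : forall e, partner (partner e) = e;
  partner_io : forall e,
    incoming_of uin1 (partner e) = ~~ incoming_of uin1 e;
  twist_sym : forall e, twist (partner e) = twist e
}.

Section Model.
Variable D : tld.

Definition incoming (e : D * 'I_4) := incoming_of (@uin1 D) e.

(* Adjacent corner at end k: b = false -> corner k (on the left when leaving
   the crossing along end k); b = true -> corner k-1 (on the right).       *)
Definition corner (k : 'I_4) (b : bool) : 'I_4 := if b then rot k 3 else k.

(* A state: st x = true means the A-splice at x, false the B-splice.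
   With the labelling above, the A-regions are the corners 0 and 2, the
   A-splice joins ends 1-2 and 3-0 (merging corners 0,2 into the region
   between the two new arcs); the B-splice joins ends 0-1 and 2-3 (merging
   corners 1,3).                                                            *)
Definition midc (st : D -> bool) (x : D) (c : 'I_4) : bool :=
  if st x then ~~ odd c else odd c.

Definition arcmate (st : D -> bool) (x : D) (k : 'I_4) : 'I_4 :=
  if st x then inord (3 - k) else (if odd k then rot k 3 else rot k 1).

(* the smoothing at x is the non-oriented one (it joins the two incoming
   ends together, and the two outgoing ends together). *)
Definition nonor (st : D -> bool) (x : D) : bool :=
  if uin1 x then ~~ st x else st x.

(* Poles: (x, true) is the I-pole (sink) on the arc joining the two incoming
   ends at a non-oriented crossing x, (x, false) the O-pole (source) on the
   arc joining the two outgoing ends.  Both markers point into the region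
   between the two arcs.                                                   *)
Definition pole := (D * bool)%type.

Definition poles0 (st : D -> bool) : {set pole} := [set p | nonor st p.1].

(* A walk state ((x,k), out, b): we are at end k of crossing x, about to
   leave the crossing disk along the band (out = true) or about to enter
   the disk (out = false); the tracked side is the corner [corner k b].     *)
Definition wstate := ((D * 'I_4) * bool * bool)%type.

Definition step (st : D -> bool) (w : wstate) : wstate :=
  let: (e, out, b) := w in
  if out then (partner e, false, if twist e then b else ~~ b)
  else ((e.1, arcmate st e.1 e.2), true, ~~ b).

(* entering a disk on an arc that carries a pole still present in A *)
Definition hits (st : D -> bool) (A : {set pole}) (w : wstate) : bool :=
  let: (e, out, b) := w in
  [&& ~~ out, nonor st e.1 & (e.1, incoming e) \in A].

(* p and q are consecutive poles on a curve of the pole curve link whose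
   pole set is A, and their markers point to the same side of the curve
   (the side of p's marker, continued along the arc from p to q, is the
   side of q's marker). *)
Definition consec_same (st : D -> bool) (A : {set pole}) (p q : pole) : Prop :=
  [/\ p \in A, q \in A, q != p &
   exists (k : 'I_4) (b : bool) (n : nat),
     let w i := iter i (step st) ((p.1, k), true, b) in
     [/\ incoming (p.1, k) = p.2,
         midc st p.1 (corner k b),
         (forall i, 0 < i < n -> ~~ hits st A (w i)) &
         let: (e, out, b') := w n in
         [/\ out = false, e.1 = q.1, incoming e = q.2 &
             midc st q.1 (corner e.2 b')]]].

Inductive reduces (st : D -> bool) : {set pole} -> {set pole} -> Prop :=
| red_refl A : reduces st A A
| red_step A B p q : consec_same st A p q ->
    reduces st ((A :\ p) :\ q) B -> reduces st A B.

Definition irreducible (st : D -> bool) (A : {set pole}) : Prop :=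
  forall p q, ~ consec_same st A p q.

(* Pieces of Sigma \ s: the corners of the crossing disks, and the two sides
   of each crossing-free component.  Every component of Sigma \ s is a union
   of pieces; two corners joined by a side of a band lie on the same boundary
   circle of Sigma. *)
Definition piece := ((D * 'I_4) + ('I_(ncirc D) * bool))%type.

Definition band_other (e : D * 'I_4) (b : bool) : piece :=
  inl ((partner e).1, corner (partner e).2 (if twist e then b else ~~ b)).

(* A link diagram realization (F, D_F), seen through what it does to the
   complement: blk labels every boundary circle of Sigma by the component of
   F \ int f(Sigma) it bounds. *)
Record realization := Realization {
  blk : piece -> nat;
  blk_band : forall e b, blk (inl (e.1, corner e.2 b)) = blk (band_other e b);
  blk_mob : forall j, circ_twist j -> blk (inr (j, true)) = blk (inr (j, false))
}.

Definition regrel (F : realization) (st : D -> bool) : rel piece :=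
  fun u v => (blk F u == blk F v) ||
    match u, v with
    | inl (x, c), inl (y, d) => [&& x == y, midc st x c & midc st x d]
    | _, _ => false
    end.

(* piece containing (the marker of) a pole: a middle corner of its crossing *)
Definition polepiece (st : D -> bool) (p : pole) : piece :=
  inl (p.1, if st p.1 then ord0 else inord 1).

Definition in_region (F : realization) (st : D -> bool) (r : piece) (p : pole) :=
  connect (regrel F st) r (polepiece st p).

End Model.

(* Main.v *)
Require Import Defs.
From mathcomp Require Import all_boot zify.
Set Implicit Arguments. Unset Strict Implicit.
Set Warnings "-notation-overridden".

Lemma am_inv (D : tld) (st : D -> bool) x k : arcmate st x (arcmate st x k) = k.
Proof.
rewrite /arcmate; case: (st x); apply/val_inj;
case: k => [[|[|[|[|m]]]] Hk] //=; rewrite ?inordK //.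
Qed.

Lemma am_neq (D : tld) (st : D -> bool) x k : arcmate st x k != k.
Proof.
rewrite /arcmate -val_eqE; case: (st x);
case: k => [[|[|[|[|m]]]] Hk] //=; rewrite ?inordK //.
Qed.

Lemma am_inc (D : tld) (st : D -> bool) x k :
  incoming (x, arcmate st x k) = if nonor st x then incoming (x,k) else ~~ incoming (x,k).
Proof.
rewrite /arcmate /nonor /incoming /incoming_of /=; case: (st x); case: (uin1 x);
case: k => [[|[|[|[|m]]]] Hk] //=; rewrite ?inordK //.
Qed.

Lemma same_inc (D : tld) (st : D -> bool) x k1 k2 : nonor st x ->
  incoming (x,k1) = incoming (x,k2) -> k2 = k1 \/ k2 = arcmate st x k1.
Proof.
rewrite /arcmate /nonor /incoming /incoming_of /=; case: (st x); case: (uin1 x) => //= _;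
case: k1 => [[|[|[|[|m]]]] Hk] //=;
case: k2 => [[|[|[|[|m2]]]] Hk2] //= _;
 try (left; apply/val_inj; by []); try (right; apply/val_inj; by rewrite /= ?inordK).
Qed.

Lemma corner_am (D : tld) (st : D -> bool) x k b :
  corner (arcmate st x k) (~~ b) = corner k b \/
  (midc st x (corner k b) && midc st x (corner (arcmate st x k) (~~ b))).
Proof.
rewrite /arcmate /midc /corner /rot; case: (st x); case: b;
case: k => [[|[|[|[|m]]]] Hk] //=;
 try (left; apply/val_inj; by rewrite /= ?inordK); try (right; by rewrite /= ?inordK).
Qed.

Section S.
Variable D : tld.
Variable st : D -> bool.

Definition am (e : D * 'I_4) : D * 'I_4 := (e.1, arcmate st e.1 e.2).
Definition pl (e : D * 'I_4) : pole D := (e.1, incoming e).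
Definition pa (A : {set pole D}) (e : D * 'I_4) : bool := nonor st e.1 && (pl e \in A).
Definition Inv (A : {set pole D}) := exists o : D * 'I_4 -> bool,
  (forall e, o (partner e) = ~~ o e) /\
  (forall e, if pa A e then o e = incoming e else o (am e) = ~~ o e).

Lemma amK e : am (am e) = e.
Proof. by case: e => x k; rewrite /am /= am_inv. Qed.
Lemma am_neqe e : am e != e.
Proof. case: e => x k; rewrite /am /= xpair_eqE eqxx /=; exact: am_neq. Qed.
Lemma pl_am e : nonor st e.1 -> pl (am e) = pl e.
Proof. by case: e => x k /= H; rewrite /pl /am /= am_inc H. Qed.
Lemma pa_am A e : pa A (am e) = pa A e.
Proof.
rewrite /pa /=; case H: (nonor st e.1) => //=; by rewrite pl_am.
Qed.
Lemma pl_same u z : nonor st z.1 -> pl u = pl z -> u = z \/ u = am z.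
Proof.
case: u => x k; case: z => y l /= H [Exy E]; subst x.
case: (same_inc H (esym E)) => ->; by [left | right].
Qed.

Lemma one_of u z z' : nonor st z.1 -> pl u = pl z -> pl z' != pl z ->
  ((am u == z) || (am u == z')) = ~~ ((u == z) || (u == z')).
Proof.
move=> Hn Hu Hz'.
have Hnu : nonor st u.1 by case: Hu => ->.
have -> : (am u == z') = false.
  apply/eqP => E; move: Hz'; by rewrite -E pl_am // Hu eqxx.
have -> : (u == z') = false.
  apply/eqP => E; move: Hz'; by rewrite -E Hu eqxx.
rewrite !orbF.
case: (pl_same Hn Hu) => ->.
  rewrite eqxx /=; exact: negbTE (am_neqe z).
have E := amK z. rewrite E eqxx. exact: esym (am_neqe z).
Qed.

Lemma step_end (w : wstate D) : (step st w).1.1 = if w.1.2 then partner w.1.1 else am w.1.1.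
Proof. by case: w => [[e o] b]; case: o. Qed.
Lemma step_out (w : wstate D) : (step st w).1.2 = ~~ w.1.2.
Proof. by case: w => [[e o] b]; case: o. Qed.
Lemma hitsE A (w : wstate D) : hits st A w = ~~ w.1.2 && pa A w.1.1.
Proof. by case: w => [[e o] b]. Qed.
Lemma iter_out (w0 : wstate D) i : w0.1.2 -> (iter i (step st) w0).1.2 = ~~ odd i.
Proof. move=> H; elim: i => [|i IH] //=; by rewrite step_out IH. Qed.


Lemma red_inv (A : {set pole D}) (p q : pole D) : A \subset poles0 st -> Inv A -> consec_same st A p q ->
  q.2 = ~~ p.2 /\ Inv ((A :\ p) :\ q).
Proof.
move=> Hsub [o [Ho1 Ho2]] [pA qA qp [k [b [n [Hk Hm Hnh Hend]]]]].
set w := fun i => iter i (step st) ((p.1, k), true, b).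
have Hnh' : forall i, 0 < i < n -> ~~ hits st A (w i) := Hnh.
have Hout i : (w i).1.2 = ~~ odd i by exact: iter_out.
have HwS i : (w i.+1).1.1 = if odd i then am (w i).1.1 else partner (w i).1.1.
  have -> : w i.+1 = step st (w i) by [].
  by rewrite step_end Hout; case: (odd i).
have Hend' : let: (e, out, b') := w n in
   [/\ out = false, e.1 = q.1, incoming e = q.2 & midc st q.1 (corner e.2 b')] := Hend.
move: Hend' => {Hend}.
case En: (w n) => [[e out] b'] [Eout Eq1 Eq2 Hmq].
have wn : (w n).1.1 = e by rewrite En.
have oddn : odd n by move: (Hout n); rewrite En /= Eout => /eqP; rewrite eq_sym eqbF_neg negbK.
move/subsetP: (Hsub) => Hs.
have nonA u : u \in A -> nonor st u.1 by move/Hs; rewrite inE.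
have ple : pl e = q by rewrite /pl Eq1 Eq2; case: (q).
have pae : pa A e by rewrite /pa ple qA Eq1 nonA.
have pl0 : pl (p.1, k) = p by rewrite /pl Hk; case: (p).
have pa0 : pa A (p.1, k) by rewrite /pa pl0 pA nonA.
have W3 i : i <= n -> o (w i).1.1 = if odd i then ~~ p.2 else p.2.
  elim: i => [|i IH] Hi.
    by move: (Ho2 (p.1, k)); rewrite pa0 /= Hk.
  have Hi' : i <= n := ltnW Hi.
  rewrite HwS /=; case Hodd: (odd i).
    have Hi0 : 0 < i by case: (i) Hodd.
    have : ~~ hits st A (w i) by apply: Hnh'; rewrite Hi0.
    rewrite hitsE Hout Hodd /= => Hnp.
    move: (Ho2 (w i).1.1); rewrite (negbTE Hnp) => ->.
    by rewrite IH // Hodd negbK.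
  by rewrite Ho1 IH // Hodd.
have q2 : q.2 = ~~ p.2.
  move: (W3 n (leqnn n)); rewrite oddn wn.
  by move: (Ho2 e); rewrite pae => -> <-.
split => //.
have L u i : i <= n -> (w i).1.1 = u -> pa A u -> u = (p.1, k) \/ u = e.
  case: i => [|i] Hi Eu Hpu; first by left; rewrite -Eu.
  case Hodd: (odd i).
    have Hi0 : 0 < i by case: (i) Hodd.
    have Hin : i < n by [].
    have : ~~ hits st A (w i) by apply: Hnh'; rewrite Hi0.
    have Ea : am (w i).1.1 = u by rewrite -Eu HwS Hodd.
    by rewrite hitsE Hout Hodd /= -pa_am Ea Hpu.
  case: (ltngtP i.+1 n) Hi => // [Hlt _ | Heq _].
    have : ~~ hits st A (w i.+1) by apply: Hnh'; rewrite Hlt.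
    by rewrite hitsE Hout /= Hodd /= Eu Hpu.
  by right; rewrite -wn -Heq.
have Cn u i : i <= n -> (w i).1.1 = u -> ~~ pa A u -> exists j, j <= n /\ (w j).1.1 = am u.
  case: i => [|i] Hi Eu Hpu; first by move: Hpu; rewrite -Eu /= pa0.
  case Hodd: (odd i).
    by exists i; split; [exact: ltnW | rewrite -Eu HwS Hodd amK].
  case: (ltngtP i.+1 n) Hi => // [Hlt _ | Heq _].
    by exists i.+2; split; [exact: Hlt | rewrite HwS /= Hodd /= Eu].
  by move: Hpu; rewrite -Eu Heq wn pae.
have Cp u i : i <= n -> (w i).1.1 = u -> exists j, j <= n /\ (w j).1.1 = partner u.
  case: i => [|i] Hi Eu.
    exists 1; split; last by rewrite HwS /= -Eu.
    by case: (n) oddn.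
  case Hodd: (odd i).
    exists i.+2; split; last by rewrite HwS /= Hodd /= Eu.
    case: (ltngtP i.+1 n) Hi => // [Heq _].
    by move: oddn; rewrite -Heq /= Hodd.
  by exists i; split; [exact: ltnW | rewrite -Eu HwS Hodd partnerK].
set V := [set u | [exists i : 'I_n.+1, (w i).1.1 == u]].
have inV u : reflect (exists i, i <= n /\ (w i).1.1 = u) (u \in V).
  apply: (iffP idP).
    rewrite inE => /existsP [i /eqP E]; exists i; split => //.
    by rewrite -ltnS ltn_ord.
  move=> [i [Hi E]]; rewrite inE; apply/existsP.
  have Hi' : i < n.+1 by rewrite ltnS.
  by exists (Ordinal Hi'); apply/eqP.
have Vpa u : pa A u -> (u \in V) = (u == (p.1, k)) || (u == e).
  move=> Hu; apply/idP/idP.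
    by move/inV => [i [Hi E]]; case: (L u i Hi E Hu) => ->; rewrite eqxx ?orbT.
  case/orP => /eqP ->; apply/inV; [by exists 0 | by exists n].
exists (fun u => o u (+) (u \in V)); split.
  move=> u; rewrite Ho1.
  have -> : (partner u \in V) = (u \in V).
    apply/idP/idP => /inV [i [Hi E]]; apply/inV.
      by case: (Cp _ i Hi E) => j [Hj Ej]; exists j; split => //; rewrite Ej partnerK.
    by case: (Cp _ i Hi E) => j [Hj Ej]; exists j.
  by rewrite addNb.
move=> u.
case Hpa': (pa ((A :\ p) :\ q) u); cbv beta.
  rewrite /pa !inE in Hpa'; case/andP: Hpa' => Hnu /and3P [plq plp plA].
  have Hpa : pa A u by rewrite /pa Hnu plA.
  rewrite (Vpa u Hpa).
  have -> : (u == (p.1, k)) = false by apply/eqP => E; move: plp; rewrite E pl0 eqxx.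
  have -> : (u == e) = false by apply/eqP => E; move: plq; rewrite E ple eqxx.
  by move: (Ho2 u); rewrite Hpa addbF.
case Hpa: (pa A u).
  have Hpa2 : pa A (am u) by rewrite pa_am.
  rewrite (Vpa u Hpa) (Vpa _ Hpa2).
  move: (Ho2 u) (Ho2 (am u)); rewrite Hpa Hpa2 => -> ->.
  have Hnu : nonor st u.1 by case/andP: Hpa.
  have Hinc : incoming (am u) = incoming u := congr1 snd (pl_am Hnu).
  rewrite Hinc.
  have : (pl u == p) || (pl u == q).
    move: Hpa'; rewrite /pa !inE Hnu /=; case/andP: Hpa => _ ->.
    by rewrite andbT; case: (pl u == p); case: (pl u == q).
  have Hne : nonor st e.1 by rewrite Eq1 nonA.
  have qp' : pl e != pl (p.1, k) by rewrite ple pl0.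
  case/orP => /eqP Hpl.
    have := one_of (z := (p.1, k)) (z' := e) (nonA _ pA) (etrans Hpl (esym pl0)) qp'.
    by move=> ->; rewrite addbN.
  have := one_of (z := e) (z' := (p.1, k)) Hne (etrans Hpl (esym ple)).
  rewrite eq_sym qp' => /(_ isT).
  by rewrite orbC [(u == e) || _]orbC => ->; rewrite addbN.
have Hpa2 : ~~ pa A (am u) by rewrite pa_am Hpa.
have -> : (am u \in V) = (u \in V).
  apply/idP/idP => /inV [i [Hi E]]; apply/inV.
    by case: (Cn _ i Hi E Hpa2) => j [Hj Ej]; exists j; split => //; rewrite Ej amK.
  by case: (Cn _ i Hi E (negbT Hpa)) => j [Hj Ej]; exists j.
by move: (Ho2 u); rewrite Hpa => ->; rewrite addNb.
Qed.

Definition pc (w : wstate D) : piece D := inl (w.1.1.1, corner w.1.1.2 w.2).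

Lemma regrel_step (F : realization D) w : regrel F st (pc w) (pc (step st w)).
Proof.
case: w => [[e o] b]; case: o; rewrite /regrel /pc /=.
  by apply/orP; left; apply/eqP; exact: (blk_band F e b).
case: (corner_am st e.1 e.2 b) => [-> | H]; first by rewrite eqxx.
by rewrite eqxx H orbT.
Qed.

Lemma regrel_sym (F : realization D) : symmetric (regrel F st).
Proof.
move=> u v; rewrite /regrel eq_sym; congr (_ || _).
case: u => [[x c]|[j c]]; case: v => [[y d]|[l d]] //.
case: eqP => Hxy; case: eqP => Hyx //=; [by rewrite Hxy andbC | by case: Hyx | by case: Hxy].
Qed.

Lemma red_region (F : realization D) (A : {set pole D}) (p q : pole D) :
  consec_same st A p q -> forall r, in_region F st r p = in_region F st r q.
Proof.
move=> [pA qA qp [k [b [n [Hk Hm Hnh Hend]]]]] r.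
set w := fun i => iter i (step st) ((p.1, k), true, b).
have Hend' : let: (e, out, b') := w n in
   [/\ out = false, e.1 = q.1, incoming e = q.2 & midc st q.1 (corner e.2 b')] := Hend.
move: Hend' => {Hend}.
case En: (w n) => [[e out] b'] [Eout Eq1 Eq2 Hmq].
have Cw i : connect (regrel F st) (pc (w 0)) (pc (w i)).
  elim: i => [|i IH]; first exact: connect0.
  apply: connect_trans IH (connect1 _).
  exact: regrel_step.
have Hs := sym_connect_sym (regrel_sym F).
have P0 : regrel F st (polepiece st p) (pc (w 0)).
  rewrite /regrel /polepiece /pc /= eqxx Hm andbT; apply/orP; right.
  by rewrite /midc; case: (st p.1) => //=; rewrite inordK.
have Pn : regrel F st (pc (w n)) (polepiece st q).
  rewrite En /regrel /polepiece /pc /= Eq1 eqxx Hmq /=; apply/orP; right.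
  by rewrite /midc; case: (st q.1) => //=; rewrite inordK.
have Cpq : connect (regrel F st) (polepiece st p) (polepiece st q).
  apply: connect_trans (connect1 P0) _.
  exact: connect_trans (Cw n) (connect1 Pn).
rewrite /in_region; apply/idP/idP => H.
  exact: connect_trans H Cpq.
by apply: connect_trans H _; rewrite Hs.
Qed.

End S.

Lemma card3 (T : finType) (A : {set T}) (f : pred T) p q :
  p \in A -> q \in A -> q != p ->
  #|[set x in A | f x]| = #|[set x in (A :\ p) :\ q | f x]| + f p + f q.
Proof.
move=> pA qA qp.
have -> : [set x in (A :\ p) :\ q | f x] = ([set x in A | f x] :\ p) :\ q.
  by apply/setP => x; rewrite !inE; case: (x == q); case: (x == p); case: (x \in A).
rewrite (cardsD1 p [set x in A | f x]) (cardsD1 q ([set x in A | f x] :\ p)) !inE.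
rewrite pA qA qp /=.
case: (f p); case: (f q) => /=; lia.
Qed.

Lemma main (D : tld) (F : realization D) (st : D -> bool) (A B : {set pole D}) :
  reduces st A B -> A \subset poles0 st -> Inv st A ->
  (forall r, #|[set p in A | p.2 && in_region F st r p]| =
             #|[set p in A | ~~ p.2 && in_region F st r p]|) ->
  forall r, #|[set p in B | p.2 && in_region F st r p]| =
            #|[set p in B | ~~ p.2 && in_region F st r p]|.
Proof.
elim=> {A B} [A | A B p q Hc Hr IH] // Hsub Hinv Hcnt.
have [q2 Hinv'] := red_inv Hsub Hinv Hc.
have Hreg := red_region F Hc.
case: Hc => pA qA qp _.
apply: IH => //.
  apply: subset_trans Hsub; apply/subsetP => x; rewrite !inE; by case/and3P.
move=> r; have := Hcnt r.
rewrite (card3 (fun x => x.2 && in_region F st r x) pA qA qp).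
rewrite (card3 (fun x => ~~ x.2 && in_region F st r x) pA qA qp).
rewrite /= q2 -Hreg; case: (p.2); case: (in_region F st r p) => /=; move/eqP; rewrite ?addn0 ?addn1 ?eqSS => /eqP E; exact: E.
Qed.

Lemma base (D : tld) (F : realization D) (st : D -> bool) r :
  #|[set p in poles0 st | p.2 && in_region F st r p]| =
  #|[set p in poles0 st | ~~ p.2 && in_region F st r p]|.
Proof.
pose fl := fun x : pole D => (x.1, ~~ x.2).
have flK : involutive fl by case=> x s; rewrite /fl /= negbK.
rewrite -(card_imset _ (inv_inj flK)); apply: eq_card => y.
apply/imsetP/idP.
  move=> [x Hx ->]; move: Hx; rewrite !inE /fl /in_region /polepiece /=.
  by rewrite negbK.
move=> Hy; exists (fl y); last by rewrite flK.
by move: Hy; rewrite !inE /fl /in_region /polepiece /=.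
Qed.

Theorem lemma3 (D : tld) (F : realization D) (st : D -> bool)
    (sbar : {set pole D}) (r : piece D) :
  reduces st (poles0 st) sbar -> irreducible st sbar ->
  #|[set p in sbar | p.2 && in_region F st r p]| =
  #|[set p in sbar | ~~ p.2 && in_region F st r p]|.
Proof.
move=> Hred _; apply: (main Hred) => //; last exact: base.
exists (@incoming D); split; first exact: partner_io.
move=> e; rewrite /pa /pl inE /=; case H: (nonor st e.1) => //=.
by rewrite /am am_inc H.
Qed.
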